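(* Let $A,B,C\in\mathcal K[\partial]$ be differential operators such that $A=BC$ and $A$ is integrable. Then $B$ is integrable.
   Context: $\mathcal V$ is an algebra of differential functions in one variable $u$ (commutative $\mathbb C$-algebra containing $R=\mathbb C[u,u',\dots]$ with commuting derivations $\partial/\partial u^{(n)}$ extending those of $R$ and $\partial/\partial x$ commuting with them and vanishing on $R$, each element having finitely many nonzero partial derivatives); total derivative $\partial=\sum_nu^{(n+1)}\frac{\partial}{\partial u^{(n)}}+\frac{\partial}{\partial x}$. Standing assumptions: $\mathcal V$ is a normal domain with fraction field $\mathcal K$; $\mathcal C=\ker\partial$ is algebraically closed. $X_F=\sum_nF^{(n)}\frac{\partial}{\partial u^{(n)}}$; $D_F=\sum_n\frac{\partial F}{\partial u^{(n)}}\partial^n$. Differential operators with $\partial a=a\partial+a'$; $X_F$ acts on them coefficientwise. For $P=\sum p_k\partial^k$, $(D_P)_F=\sum_kF^{(k)}D_{p_k}$; bidifferential $M=\sum M_{kl}\partial_1^k\partial_2^l$ ($M_{kl}\in\mathcal K$), $M_F=\sum M_{kl}F^{(k)}\partial^l$. A differential operator $A$ is integrable if there is a bidifferential operator $M$ over $\mathcal K$ such that $X_{A(F)}(A)-(D_A)_FA=AM_F$ for all $F\in\mathcal V$. *)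

(* Defs.v *)
From HB Require Import structures.
From mathcomp Require Import all_boot all_algebra.
From mathcomp Require Import complex reals.
Set Implicit Arguments. Unset Strict Implicit. Unset Printing Implicit Defensive.
Import GRing.Theory.
Local Open Scope ring_scope.

(* An algebra of differential functions V in one variable u, presented inside
   its fraction field K.  The complex numbers are R[i] for a realType R
   (any realType is the field of real numbers), embedded in K by [iota].
   The derivations d n = d/du^(n) and dx = d/dx are given on K (they extend
   uniquely from V to its fraction field), and V is required to be stable
   under them. *)
Record DiffAlg (R : realType) (K : fieldType) := {
  iota : {rmorphism R[i] -> K};
  V : pred K;
  u : nat -> K;
  d : nat -> K -> K;
  dx : K -> K;
  ord : K -> nat;
  V0 : 0 \in V; V1 : 1 \in V;
  VB : forall a b, a \in V -> b \in V -> a - b \in V;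
  VM : forall a b, a \in V -> b \in V -> a * b \in V;
  Viota : forall c, iota c \in V;
  Vu : forall n, u n \in V;
  Kfrac : forall k, exists a b, [/\ a \in V, b \in V, b != 0 & k = a / b];
  Vnormal : forall (p : {poly K}) (x : K),
      p \is monic -> (forall i, p`_i \in V) -> root p x -> x \in V;
  dD : forall n a b, d n (a + b) = d n a + d n b;
  dM : forall n a b, d n (a * b) = a * d n b + b * d n a;
  diota : forall n c, d n (iota c) = 0;
  dxD : forall a b, dx (a + b) = dx a + dx b;
  dxM : forall a b, dx (a * b) = a * dx b + b * dx a;
  dxiota : forall c, dx (iota c) = 0;
  du : forall n m, d n (u m) = (n == m)%:R;
  dxu : forall m, dx (u m) = 0;
  dC : forall n m a, d n (d m a) = d m (d n a);
  dxC : forall n a, d n (dx a) = dx (d n a);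
  dV : forall n a, a \in V -> d n a \in V;
  dxV : forall a, a \in V -> dx a \in V;
  ordP : forall a n, (ord a <= n)%N -> d n a = 0;
}.

Section Ops.
Variables (R : realType) (K : fieldType) (S : DiffAlg R K).

Definition der (a : K) : K :=
  \sum_(n < ord S a) u S n.+1 * d S n a + dx S a.

Definition dern (n : nat) (F : K) : K := iter n der F.

Definition constants : pred K := [pred a | (a \in V S) && (der a == 0)].

Definition constants_alg_closed : Prop :=
  forall p : {poly K}, (forall i, p`_i \in constants) -> (1 < size p)%N ->
    exists2 x, x \in constants & root p x.

(* Differential operators sum_k p_k \partial^k over K are represented by
   their coefficient polynomials {poly K} ('X^k stands for \partial^k);
   addition and left multiplication by elements of K are the polynomial
   ones, composition is given by the Leibniz rule
   \partial^i b = sum_l binom(i,l) b^(l) \partial^(i-l). *)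
Definition dmul (P Q : {poly K}) : {poly K} :=
  \sum_(i < size P) \sum_(j < size Q) \sum_(l < i.+1)
     (P`_i * 'C(i, l)%:R * dern l Q`_j) *: 'X^(i - l + j).

Definition dapply (P : {poly K}) (F : K) : K :=
  \sum_(k < size P) P`_k * dern k F.

Definition XF (F a : K) : K := \sum_(n < ord S a) dern n F * d S n a.

Definition XFop (F : K) (P : {poly K}) : {poly K} := map_poly (XF F) P.

Definition Dfun (a : K) : {poly K} := \sum_(n < ord S a) d S n a *: 'X^n.

Definition DopF (P : {poly K}) (F : K) : {poly K} :=
  \sum_(k < size P) dern k F *: Dfun P`_k.

(* Bidifferential operators M = sum M_kl \partial_1^k \partial_2^l over K are
   represented as {poly {poly K}} (outer index k, inner index l);
   M_F = sum_kl M_kl F^(k) \partial^l. *)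
Definition bidF (M : {poly {poly K}}) (F : K) : {poly K} :=
  \sum_(k < size M) dern k F *: M`_k.

Definition integrable (A : {poly K}) : Prop :=
  exists M : {poly {poly K}}, forall F, F \in V S ->
    XFop (dapply A F) A - dmul (DopF A F) A = dmul A (bidF M F).

End Ops.

(* Main.v *)
Require Import Defs.
From mathcomp Require Import all_boot all_algebra.
From mathcomp Require Import complex reals.
From mathcomp Require Import ring zify.
Unset Printing Implicit Defensive.
Import GRing.Theory.
Local Open Scope ring_scope.

Lemma sum_bnd_le (K : nmodType) (f : nat -> K) M N :
  (forall n, (M <= n)%N -> f n = 0) -> (M <= N)%N ->
  \sum_(n < N) f n = \sum_(n < M) f n.
Proof.
move=> fz MN; rewrite -!(big_mkord xpredT) (big_cat_nat (leq0n M) MN) /=.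
have -> : \sum_(M <= i < N) f i = 0.
  rewrite big_nat_cond big1 // => i /andP [/andP [Mi _] _]; exact: fz.
by rewrite addr0.
Qed.

Lemma sum_bnd (K : nmodType) (f : nat -> K) M N :
  (forall n, (M <= n)%N -> f n = 0) -> (forall n, (N <= n)%N -> f n = 0) ->
  \sum_(n < N) f n = \sum_(n < M) f n.
Proof.
move=> fM fN; case: (leqP M N) => [/(sum_bnd_le _ _ _ _ fM) //|/ltnW NM].
by rewrite (sum_bnd_le _ _ _ _ fN NM).
Qed.

Section Add.
Variables (K L : zmodType) (f : K -> L).
Hypothesis fD : forall a b, f (a + b) = f a + f b.
Lemma add_f0 : f 0 = 0.
Proof. by apply: (addrI (f 0)); rewrite -fD !addr0. Qed.
Lemma add_fN a : f (- a) = - f a.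
Proof. by apply: (addrI (f a)); rewrite -fD !subrr add_f0. Qed.
Lemma add_fB a b : f (a - b) = f a - f b.
Proof. by rewrite fD add_fN. Qed.
Lemma add_fsum I (r : seq I) (P : pred I) (g : I -> K) :
  f (\sum_(i <- r | P i) g i) = \sum_(i <- r | P i) f (g i).
Proof.
elim/big_rec2: _ => [|i y1 y2 _ <-]; [exact: add_f0| by rewrite fD].
Qed.
Lemma add_fMn a n : f (a *+ n) = f a *+ n.
Proof. elim: n => [|n IH]; by rewrite ?mulr0n ?add_f0 // !mulrS fD IH. Qed.
End Add.

Arguments dern : simpl never.
Arguments der : simpl never.
Arguments dmul : simpl never.
Arguments dapply : simpl never.

Section Basic.
Variables (R : realType) (K : fieldType) (S : DiffAlg R K).

Definition bnd (a : K) (N : nat) := forall n, (N <= n)%N -> d S n a = 0.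

Lemma bnd_ord a : bnd a (ord S a).
Proof. by move=> n; apply: ordP. Qed.

Lemma bnd_le a N M : bnd a N -> (N <= M)%N -> bnd a M.
Proof. by move=> b NM n Mn; apply: b; apply: leq_trans Mn. Qed.
Lemma bnd_ordle a N : (ord S a <= N)%N -> bnd a N.
Proof. by move=> h; apply: bnd_le (bnd_ord a) h. Qed.

Lemma d0 n : d S n 0 = 0. Proof. exact: add_f0 _ _ _ (dD S n). Qed.
Lemma dN n a : d S n (- a) = - d S n a. Proof. by rewrite (add_fN _ _ _ (dD S n)). Qed.
Lemma dB n a b : d S n (a - b) = d S n a - d S n b. Proof. by rewrite (add_fB _ _ _ (dD S n)). Qed.
Lemma dsum n I (r : seq I) (P : pred I) (g : I -> K) :
  d S n (\sum_(i <- r | P i) g i) = \sum_(i <- r | P i) d S n (g i).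
Proof. by rewrite (add_fsum _ _ _ (dD S n)). Qed.
Lemma d1 n : d S n 1 = 0.
Proof. have := dM S n 1 1; rewrite mulr1 mul1r => h. by apply: (addrI (d S n 1)); rewrite addr0 -h. Qed.
Lemma dnat n k : d S n k%:R = 0.
Proof. by rewrite (add_fMn _ _ _ (dD S n) 1 k) d1 mul0rn. Qed.

Lemma dx0 : dx S 0 = 0. Proof. exact: add_f0 _ _ _ (dxD S). Qed.
Lemma dxB a b : dx S (a - b) = dx S a - dx S b. Proof. by rewrite (add_fB _ _ _ (dxD S)). Qed.

Lemma bnd0 N : bnd 0 N. Proof. by move=> n _; apply: d0. Qed.
Lemma bndD a b N : bnd a N -> bnd b N -> bnd (a + b) N.
Proof. by move=> ha hb n Nn; rewrite dD ha ?hb ?addr0. Qed.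
Lemma bndB a b N : bnd a N -> bnd b N -> bnd (a - b) N.
Proof. by move=> ha hb n Nn; rewrite dB ha ?hb ?subr0. Qed.
Lemma bndM a b N : bnd a N -> bnd b N -> bnd (a * b) N.
Proof. by move=> ha hb n Nn; rewrite dM ha ?hb ?mulr0 ?addr0. Qed.
Lemma bndnat k N : bnd k%:R N. Proof. by move=> n _; apply: dnat. Qed.

Lemma der_wide a N : bnd a N ->
  der S a = \sum_(n < N) u S n.+1 * d S n a + dx S a.
Proof.
move=> b; rewrite /der; congr (_ + _).
apply: (sum_bnd _ (fun n => u S n.+1 * d S n a)) => n Nn.
  by rewrite b ?mulr0.
by rewrite (ordP Nn) mulr0.
Qed.

Lemma derD a b : der S (a + b) = der S a + der S b.
Proof.
set N := maxn (ord S (a + b)) (maxn (ord S a) (ord S b)).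
have hab : bnd (a + b) N by apply: bnd_ordle; rewrite leq_maxl.
have ha : bnd a N by apply: bnd_ordle; rewrite /N leq_max leq_maxl orbT.
have hb : bnd b N by apply: bnd_ordle; rewrite /N leq_max leq_maxr orbT.
rewrite (der_wide _ _ hab) (der_wide _ _ ha) (der_wide _ _ hb) dxD.
rewrite addrACA -big_split /=; congr (_ + _); apply: eq_bigr => i _.
by rewrite dD mulrDr.
Qed.

Lemma der0 : der S 0 = 0. Proof. exact: add_f0 _ _ _ derD. Qed.
Lemma derB a b : der S (a - b) = der S a - der S b. Proof. by rewrite (add_fB _ _ _ derD). Qed.
Lemma dersum I (r : seq I) (P : pred I) (g : I -> K) :
  der S (\sum_(i <- r | P i) g i) = \sum_(i <- r | P i) der S (g i).
Proof. by rewrite (add_fsum _ _ _ derD). Qed.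

Lemma derM a b : der S (a * b) = der S a * b + a * der S b.
Proof.
set N := maxn (ord S (a * b)) (maxn (ord S a) (ord S b)).
have hab : bnd (a * b) N by apply: bnd_ordle; rewrite leq_maxl.
have ha : bnd a N by apply: bnd_ordle; rewrite /N leq_max leq_maxl orbT.
have hb : bnd b N by apply: bnd_ordle; rewrite /N leq_max leq_maxr orbT.
rewrite (der_wide _ _ hab) (der_wide _ _ ha) (der_wide _ _ hb) dxM.
rewrite mulrDl mulrDr addrACA mulr_suml mulr_sumr -big_split /=.
congr (_ + _); last by ring.
apply: eq_bigr => i _; rewrite dM; ring.
Qed.

Lemma d_der M a : d S M (der S a) = der S (d S M a) + (if M is M'.+1 then d S M' a else 0).
Proof.
set N := (ord S a).+1.
have ha : bnd a N by apply: bnd_ordle.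
have hda : bnd (d S M a) N by move=> n Nn; rewrite dC ha ?d0.
rewrite (der_wide _ _ ha) (der_wide _ _ hda) dD dsum dxC.
under eq_bigr => i _ do rewrite dM du dC.
rewrite big_split /= addrAC; congr (_ + _).
case: M {hda} => [|M].
  by rewrite big1 // => i _; rewrite mulr0.
have -> : d S M a = if (M < N)%N then d S M a else 0.
  by case: ifP => // /negbT; rewrite -leqNgt => /ha.
rewrite (eq_bigr (fun i : 'I_N => if (i:nat) == M then d S i a else 0)); last first.
  move=> i _; rewrite eqSS eq_sym; case: eqP => _; by rewrite ?mulr1 ?mulr0.
rewrite -big_mkcond /=.
exact: (big_ord1_eq (+%R : Monoid.law (0 : K)) (fun i => d S i a) M N).
Qed.

Lemma dxnat k : dx S k%:R = 0.
Proof.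
have d1x : dx S 1 = 0.
  have := dxM S 1 1; rewrite mulr1 mul1r => h.
  by apply: (addrI (dx S 1)); rewrite addr0 -h.
by rewrite (add_fMn _ _ _ (dxD S) 1 k) d1x mul0rn.
Qed.

Lemma dernat k : der S k%:R = 0.
Proof.
rewrite (der_wide _ 0 (bndnat k 0)) big_ord0 add0r; exact: dxnat.
Qed.

Lemma dernS n F : dern S n.+1 F = der S (dern S n F).
Proof. by rewrite /dern iterS. Qed.
Lemma dern0 n : dern S n 0 = 0.
Proof. by elim: n => // n IH; rewrite dernS IH der0. Qed.
Lemma dernD n a b : dern S n (a + b) = dern S n a + dern S n b.
Proof. by elim: n => // n IH; rewrite !dernS IH derD. Qed.
Lemma dernB n a b : dern S n (a - b) = dern S n a - dern S n b.
Proof. by rewrite (add_fB _ _ _ (dernD n)). Qed.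
Lemma dernsum n I (r : seq I) (P : pred I) (g : I -> K) :
  dern S n (\sum_(i <- r | P i) g i) = \sum_(i <- r | P i) dern S n (g i).
Proof. by rewrite (add_fsum _ _ _ (dernD n)). Qed.
Lemma dern_add k l F : dern S (k + l) F = dern S k (dern S l F).
Proof. by rewrite /dern iterD. Qed.

Lemma derMn (k : nat) b : der S (k%:R * b) = k%:R * der S b.
Proof. by rewrite derM dernat mul0r add0r. Qed.

Lemma dern_mul i a b : dern S i (a * b) =
  \sum_(l < i.+1) 'C(i, l)%:R * (dern S l a * dern S (i - l) b).
Proof.
elim: i => [|i IH]; first by rewrite big_ord1 /= mul1r.
have step : forall l : 'I_i.+1, der S ('C(i,l)%:R * (dern S l a * dern S (i-l) b)) =
  'C(i,l)%:R * (dern S l.+1 a * dern S (i-l) b) + 'C(i,l)%:R * (dern S l a * dern S (i-l).+1 b).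
  by move=> l; rewrite derMn derM !dernS mulrDr.
rewrite dernS IH dersum (eq_bigr _ (fun l _ => step l)) big_split /=.
rewrite [RHS]big_ord_recl bin0 subn0 mul1r.
have e1 : \sum_(l < i.+1) 'C(i, l)%:R * (dern S l a * dern S (i - l).+1 b) =
  dern S 0 a * dern S i.+1 b + \sum_(l < i.+1) 'C(i, l.+1)%:R * (dern S l.+1 a * dern S (i - l) b).
  rewrite big_ord_recl bin0 subn0 mul1r; congr (_ + _).
  rewrite [RHS]big_ord_recr /= (bin_small (ltnSn i)) mul0r addr0.
  apply: eq_bigr => l _; rewrite /bump leq0n add1n; congr (_ * (_ * _)).
  by rewrite -subSn ?ltn_ord // subSS.
rewrite e1 addrCA; congr (_ + _).
rewrite -big_split; apply: eq_bigr => l _.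
rewrite !lift0 binS natrD subSS /=; ring.
Qed.

Lemma ord_u m : (m < ord S (u S m))%N.
Proof.
rewrite ltnNge; apply/negP => h; have := ordP h; rewrite du eqxx => /eqP.
by rewrite oner_eq0.
Qed.

Lemma der_u m : der S (u S m) = u S m.+1.
Proof.
rewrite /der dxu addr0.
rewrite (bigD1 (Ordinal (ord_u m))) //= du eqxx mulr1 big1 ?addr0 // => i.
move=> /eqP ne; rewrite du; case: eqP => e; last by rewrite mulr0.
by case: ne; apply: val_inj.
Qed.

Lemma dern_u k m : dern S k (u S m) = u S (m + k).
Proof. by elim: k => [|k IH]; rewrite ?addn0 // dernS IH der_u addnS. Qed.

Lemma d_dern_top z H l : (forall M, (H < M)%N -> d S M z = 0) ->
  (forall M, (H + l < M)%N -> d S M (dern S l z) = 0) /\ d S (H + l) (dern S l z) = d S H z.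
Proof.
move=> hz; elim: l => [|l [IH1 IH2]]; first by rewrite addn0.
split.
  case=> // M; rewrite addnS ltnS => lt.
  by rewrite dernS d_der (IH1 M.+1 (ltn_trans lt (ltnSn M))) (IH1 M lt) der0 addr0.
by rewrite addnS dernS d_der (IH1 _ (ltnSn _)) der0 add0r IH2.
Qed.

Implicit Types (P Q : {poly K}) (F G a : K).

Lemma dapply_wide P F N : (size P <= N)%N ->
  dapply S P F = \sum_(k < N) P`_k * dern S k F.
Proof.
move=> sP; rewrite /dapply; symmetry.
apply: (sum_bnd _ (fun k => P`_k * dern S k F)) => n hn.
  by rewrite nth_default ?mul0r.
by rewrite nth_default ?mul0r //; apply: leq_trans hn.
Qed.

Lemma dapplyD P Q F : dapply S (P + Q) F = dapply S P F + dapply S Q F.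
Proof.
set N := maxn (size (P + Q)) (maxn (size P) (size Q)).
have h1 : (size (P + Q)%R <= N)%N by rewrite leq_maxl.
have h2 : (size P <= N)%N by rewrite /N !leq_max leqnn orbT.
have h3 : (size Q <= N)%N by rewrite /N !leq_max leqnn !orbT.
rewrite (dapply_wide (P + Q) F N h1) (dapply_wide P F N h2) (dapply_wide Q F N h3).
by rewrite -big_split; apply: eq_bigr => i _; rewrite coefD mulrDl.
Qed.

Lemma dapply0 F : dapply S 0 F = 0.
Proof. exact: add_f0 _ _ _ (fun P Q => dapplyD P Q F). Qed.
Lemma dapplyB P Q F : dapply S (P - Q) F = dapply S P F - dapply S Q F.
Proof. by rewrite (add_fB _ _ _ (fun P Q => dapplyD P Q F)). Qed.
Lemma dapplysum I (r : seq I) (Pr : pred I) (g : I -> {poly K}) F :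
  dapply S (\sum_(i <- r | Pr i) g i) F = \sum_(i <- r | Pr i) dapply S (g i) F.
Proof. by rewrite (add_fsum _ _ _ (fun P Q => dapplyD P Q F)). Qed.

Lemma dapplyZ a P F : dapply S (a *: P) F = a * dapply S P F.
Proof.
rewrite (dapply_wide (a *: P) F (size P)) ?size_scale_leq // /dapply mulr_sumr.
by apply: eq_bigr => i _; rewrite coefZ mulrA.
Qed.

Lemma dapplyXn k F : dapply S 'X^k F = dern S k F.
Proof.
rewrite (dapply_wide _ F k.+1) ?size_polyXn // big_ord_recr /= coefXn eqxx mul1r.
by rewrite big1 ?add0r // => i _; rewrite coefXn (ltn_eqF (ltn_ord i)) mul0r.
Qed.

Lemma dapplyZXn a k F : dapply S (a *: 'X^k) F = a * dern S k F.
Proof. by rewrite dapplyZ dapplyXn. Qed.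

Lemma dapplyFD P F G : dapply S P (F + G) = dapply S P F + dapply S P G.
Proof.
by rewrite /dapply -big_split; apply: eq_bigr => i _; rewrite dernD mulrDr.
Qed.
Lemma dapplyFB P F G : dapply S P (F - G) = dapply S P F - dapply S P G.
Proof. by rewrite (add_fB _ _ _ (dapplyFD P)). Qed.
Lemma dapplyF0 P : dapply S P 0 = 0.
Proof. exact: add_f0 _ _ _ (dapplyFD P). Qed.
Lemma dapplyFsum P I (r : seq I) (Pr : pred I) (g : I -> K) :
  dapply S P (\sum_(i <- r | Pr i) g i) = \sum_(i <- r | Pr i) dapply S P (g i).
Proof. by rewrite (add_fsum _ _ _ (dapplyFD P)). Qed.

Lemma dapplysum_ord n (g : 'I_n -> {poly K}) F :
  dapply S (\sum_(i < n) g i) F = \sum_(i < n) dapply S (g i) F.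
Proof. exact: dapplysum. Qed.

Lemma dapply_dmul P Q G : dapply S (dmul S P Q) G = dapply S P (dapply S Q G).
Proof.
rewrite /dmul (dapplysum_ord (size P)) [RHS]/dapply; apply: eq_bigr => i _.
rewrite dapplysum_ord dernsum mulr_sumr; apply: eq_bigr => j _.
rewrite dapplysum_ord dern_mul mulr_sumr; apply: eq_bigr => l _.
by rewrite dapplyZXn -dern_add !mulrA.
Qed.

Lemma dapply_ext0 P : (forall G, G \in V S -> dapply S P G = 0) -> P = 0.
Proof.
move=> h; set N := \max_(k < size P) ord S P`_k.
have hN : forall k, (k < size P)%N -> bnd P`_k N.
  move=> k kP; apply: bnd_ordle.
  exact: (@leq_bigmax _ (fun k : 'I_(size P) => ord S P`_k) (Ordinal kP)).
have := h _ (Vu S N); rewrite /dapply.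
under eq_bigr => k _ do rewrite dern_u.
move=> e; apply/polyP => j; rewrite coef0.
case: (ltnP j (size P)) => jP; last by rewrite nth_default.
suff key : d S (N + j) (\sum_(k < size P) P`_k * u S (N + k)) = P`_j.
  by rewrite -key e d0.
rewrite dsum (bigD1 (Ordinal jP)) //= dM du eqxx mulr1 (hN j jP) ?leq_addr // mulr0 addr0.
rewrite big1 ?addr0 // => k /eqP ne; rewrite dM du (hN k (ltn_ord k)) ?leq_addr // mulr0 addr0.
rewrite eqn_add2l; case: eqP => e'; last by rewrite mulr0.
by case: ne; apply: val_inj.
Qed.

Lemma dapply_ext P Q : (forall G, G \in V S -> dapply S P G = dapply S Q G) -> P = Q.
Proof.
move=> h; apply/eqP; rewrite -subr_eq0; apply/eqP; apply: dapply_ext0 => G hG.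
by rewrite dapplyB h ?subrr.
Qed.

Lemma XF_wide F a N : bnd a N -> XF S F a = \sum_(n < N) dern S n F * d S n a.
Proof.
move=> b; rewrite /XF; symmetry.
apply: (sum_bnd _ (fun n => dern S n F * d S n a)) => n Nn.
  by rewrite (ordP Nn) mulr0.
by rewrite (b n Nn) mulr0.
Qed.

Lemma XFD F a b : XF S F (a + b) = XF S F a + XF S F b.
Proof.
set N := maxn (ord S (a + b)) (maxn (ord S a) (ord S b)).
have hab : bnd (a + b) N by apply: bnd_ordle; rewrite leq_maxl.
have ha : bnd a N by apply: bnd_ordle; rewrite /N leq_max leq_maxl orbT.
have hb : bnd b N by apply: bnd_ordle; rewrite /N leq_max leq_maxr orbT.
rewrite (XF_wide _ _ _ hab) (XF_wide _ _ _ ha) (XF_wide _ _ _ hb) -big_split.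
by apply: eq_bigr => i _; rewrite dD mulrDr.
Qed.

Lemma XF0 F : XF S F 0 = 0. Proof. exact: add_f0 _ _ _ (XFD F). Qed.
Lemma XFB F a b : XF S F (a - b) = XF S F a - XF S F b.
Proof. by rewrite (add_fB _ _ _ (XFD F)). Qed.
Lemma XFsum F I (r : seq I) (Pr : pred I) (g : I -> K) :
  XF S F (\sum_(i <- r | Pr i) g i) = \sum_(i <- r | Pr i) XF S F (g i).
Proof. by rewrite (add_fsum _ _ _ (XFD F)). Qed.

Lemma XFM F a b : XF S F (a * b) = a * XF S F b + b * XF S F a.
Proof.
set N := maxn (ord S (a * b)) (maxn (ord S a) (ord S b)).
have hab : bnd (a * b) N by apply: bnd_ordle; rewrite leq_maxl.
have ha : bnd a N by apply: bnd_ordle; rewrite /N leq_max leq_maxl orbT.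
have hb : bnd b N by apply: bnd_ordle; rewrite /N leq_max leq_maxr orbT.
rewrite (XF_wide _ _ _ hab) (XF_wide _ _ _ ha) (XF_wide _ _ _ hb) !mulr_sumr -big_split.
by apply: eq_bigr => i _; rewrite dM /=; ring.
Qed.

Lemma XF_der F a : XF S F (der S a) = der S (XF S F a).
Proof.
set N := (ord S a).+1.
have ha : bnd a N by apply: bnd_ordle.
have hda : bnd (der S a) N.
  case=> // n; rewrite ltnS => hn; rewrite d_der (bnd_ord a n.+1) ?der0 ?add0r.
    exact: bnd_ord.
  exact: leqW.
rewrite (XF_wide _ _ _ hda) (XF_wide _ _ _ ha) dersum.
have e : forall n : 'I_N, der S (dern S n F * d S n a) =
   dern S n.+1 F * d S n a + dern S n F * der S (d S n a).
  by move=> n; rewrite derM dernS.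
rewrite (eq_bigr _ (fun n _ => e n)) big_split /=.
under eq_bigr => n _ do rewrite d_der mulrDr.
rewrite big_split /= addrC; congr (_ + _).
rewrite big_ord_recl /= mulr0 add0r [RHS]big_ord_recr /= (bnd_ord a) // mulr0 addr0.
by apply: eq_bigr => i _.
Qed.

Lemma XF_dern F k a : XF S F (dern S k a) = dern S k (XF S F a).
Proof. by elim: k => // k IH; rewrite !dernS XF_der IH. Qed.

Lemma XFnat F k : XF S F k%:R = 0.
Proof. by rewrite (XF_wide _ _ 0 (bndnat k 0)) big_ord0. Qed.

Lemma coef_XFop F P i : (XFop S F P)`_i = XF S F P`_i.
Proof. by rewrite /XFop coef_map_id0 // XF0. Qed.

Lemma size_XFop F P : (size (XFop S F P) <= size P)%N.
Proof. by rewrite /XFop map_polyE; apply: leq_trans (size_Poly _) _; rewrite size_map. Qed.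

Lemma dapply_XFop F P G :
  dapply S (XFop S F P) G = XF S F (dapply S P G) - dapply S P (XF S F G).
Proof.
rewrite (dapply_wide _ G _ (size_XFop F P)) /dapply XFsum; apply/eqP.
rewrite eq_sym subr_eq -big_split /=; apply/eqP; apply: eq_bigr => i _.
rewrite XFM. rewrite coef_XFop. rewrite XF_dern. ring.
Qed.

Lemma dapply_Dfun a G : dapply S (Dfun S a) G = XF S G a.
Proof.
rewrite /Dfun dapplysum_ord /XF; apply: eq_bigr => n _.
by rewrite dapplyZXn mulrC.
Qed.

Lemma dapply_DopF P F G : dapply S (DopF S P F) G = dapply S (XFop S G P) F.
Proof.
rewrite /DopF dapplysum_ord (dapply_wide _ F _ (size_XFop G P)).
apply: eq_bigr => k _; rewrite dapplyZ dapply_Dfun coef_XFop mulrC //.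
Qed.

Lemma dapply_bidF M F G :
  dapply S (bidF S M F) G = \sum_(k < size M) dern S k F * dapply S M`_k G.
Proof. by rewrite /bidF dapplysum_ord; apply: eq_bigr => k _; rewrite dapplyZ. Qed.


Lemma dmulDl P Q T : dmul S (P + Q) T = dmul S P T + dmul S Q T.
Proof. by apply: dapply_ext => G _; rewrite dapplyD !dapply_dmul dapplyD. Qed.
Lemma dmulBl P Q T : dmul S (P - Q) T = dmul S P T - dmul S Q T.
Proof. by apply: dapply_ext => G _; rewrite dapplyB !dapply_dmul dapplyB. Qed.
Lemma dmulDr P Q T : dmul S T (P + Q) = dmul S T P + dmul S T Q.
Proof. by apply: dapply_ext => G _; rewrite dapplyD !dapply_dmul dapplyD dapplyFD. Qed.
Lemma dmulBr P Q T : dmul S T (P - Q) = dmul S T P - dmul S T Q.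
Proof. by apply: dapply_ext => G _; rewrite dapplyB !dapply_dmul dapplyB dapplyFB. Qed.
Lemma dmulZl a P Q : dmul S (a *: P) Q = a *: dmul S P Q.
Proof. by apply: dapply_ext => G _; rewrite dapplyZ !dapply_dmul dapplyZ. Qed.
Lemma dmulA P Q T : dmul S (dmul S P Q) T = dmul S P (dmul S Q T).
Proof. by apply: dapply_ext => G _; rewrite !dapply_dmul. Qed.
Lemma dmul0l P : dmul S 0 P = 0.
Proof. by apply: dapply_ext => G _; rewrite dapply_dmul !dapply0. Qed.
Lemma dmul0r P : dmul S P 0 = 0.
Proof. by apply: dapply_ext => G _; rewrite dapply_dmul !dapply0 dapplyF0. Qed.
Lemma dmulsuml n (g : 'I_n -> {poly K}) Q :
  dmul S (\sum_(i < n) g i) Q = \sum_(i < n) dmul S (g i) Q.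
Proof.
apply: dapply_ext => G _; rewrite dapply_dmul !dapplysum_ord.
by apply: eq_bigr => i _; rewrite dapply_dmul.
Qed.

Lemma size_sum_le I (r : seq I) (Pr : pred I) (g : I -> {poly K}) D :
  (forall i, Pr i -> (size (g i) <= D)%N) -> (size (\sum_(i <- r | Pr i) g i)%R <= D)%N.
Proof.
move=> h; elim/big_ind: _ => //; first by rewrite size_poly0.
by move=> x y hx hy; apply: leq_trans (size_polyD _ _) _; rewrite geq_max hx hy.
Qed.

Lemma size_sum_ord n (g : 'I_n -> {poly K}) D :
  (forall i, (size (g i) <= D)%N) -> (size (\sum_(i < n) g i)%R <= D)%N.
Proof. by move=> h; apply: size_sum_le => i _. Qed.

Lemma coef_sum_ord n (g : 'I_n -> {poly K}) e :
  (\sum_(i < n) g i)`_e = \sum_(i < n) (g i)`_e.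
Proof. exact: coef_sum. Qed.

Lemma dmul_wide P Q n m : (size P <= n)%N -> (size Q <= m)%N ->
  dmul S P Q = \sum_(i < n) \sum_(j < m) \sum_(l < i.+1)
     (P`_i * 'C(i, l)%:R * dern S l Q`_j) *: 'X^(i - l + j).
Proof.
move=> hP hQ; rewrite /dmul.
pose f := fun i => \sum_(j < m) \sum_(l < i.+1)
     (P`_i * 'C(i, l)%:R * dern S l Q`_j) *: 'X^(i - l + j).
have -> : \sum_(i < size P) \sum_(j < size Q) \sum_(l < i.+1)
     (P`_i * 'C(i, l)%:R * dern S l Q`_j) *: 'X^(i - l + j) = \sum_(i < size P) f i.
  apply: eq_bigr => i _; rewrite /f; symmetry.
  apply: (sum_bnd _ (fun j => \sum_(l < i.+1)
     (P`_i * 'C(i, l)%:R * dern S l Q`_j) *: 'X^(i - l + j))) => j hj;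
  rewrite big1 // => l _; rewrite [Q`_j]nth_default ?dern0 ?mulr0 ?scale0r //;
  exact: leq_trans hQ hj.
symmetry; apply: (sum_bnd _ f) => i hi; rewrite /f big1 // => j _;
rewrite big1 // => l _; rewrite [P`_i]nth_default ?mul0r ?scale0r //;
exact: leq_trans hP hi.
Qed.

Lemma size_dmul_le P Q p q : (size P <= p.+1)%N -> (size Q <= q.+1)%N ->
  (size (dmul S P Q) <= (p + q).+1)%N.
Proof.
move=> hP hQ; rewrite (dmul_wide P Q p.+1 q.+1) //.
apply: size_sum_ord => i; apply: size_sum_ord => j; apply: size_sum_ord => l.
apply: leq_trans (size_scale_leq _ _) _; rewrite size_polyXn ltnS.
apply: leq_add; last by rewrite -ltnS.
by apply: leq_trans (leq_subr _ _) _; rewrite -ltnS.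
Qed.

Lemma coef_dmul_top P Q p q : (size P <= p.+1)%N -> (size Q <= q.+1)%N ->
  (dmul S P Q)`_(p + q) = P`_p * Q`_q.
Proof.
move=> hP hQ; rewrite (dmul_wide P Q p.+1 q.+1) // coef_sum_ord big_ord_recr /=.
rewrite big1 ?add0r; last first.
  move=> i _; rewrite coef_sum_ord big1 // => j _; rewrite coef_sum_ord big1 // => l _.
  rewrite coefZ coefXn; suff h : (i - l + j < p + q)%N by rewrite (gtn_eqF h) mulr0.
  apply: (@leq_trans (i + j).+1); first by rewrite ltnS leq_add2r leq_subr.
  by rewrite -addSn leq_add // -ltnS.
rewrite coef_sum_ord big_ord_recr /= big1 ?add0r; last first.
  move=> j _; rewrite coef_sum_ord big1 // => l _.
  rewrite coefZ coefXn; suff h : (p - l + j < p + q)%N by rewrite (gtn_eqF h) mulr0.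
  apply: (@leq_trans (p + j).+1); first by rewrite ltnS leq_add2r leq_subr.
  by rewrite -addnS leq_add2l.
rewrite coef_sum_ord big_ord_recl /= big1 ?addr0; last first.
  move=> l _; rewrite coefZ coefXn /bump /= add1n.
  suff h : (p - l.+1 + q < p + q)%N by rewrite (gtn_eqF h) mulr0.
  rewrite ltn_add2r; have := ltn_ord l => hl.
  by rewrite subnSK // leq_subr.
by rewrite coefZ coefXn subn0 eqxx mulr1 bin0 mulr1.
Qed.

Lemma size_dmul P Q : P != 0 -> Q != 0 ->
  size (dmul S P Q) = (size P + size Q).-1.
Proof.
move=> P0 Q0.
have sP : size P = (size P).-1.+1 by rewrite prednK // size_poly_gt0.
have sQ : size Q = (size Q).-1.+1 by rewrite prednK // size_poly_gt0.
have le := size_dmul_le P Q (size P).-1 (size Q).-1 (eq_leq sP) (eq_leq sQ).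
have top := coef_dmul_top P Q (size P).-1 (size Q).-1 (eq_leq sP) (eq_leq sQ).
have e : (size P + size Q).-1 = ((size P).-1 + (size Q).-1).+1.
  by rewrite {1}sP {1}sQ addSn addnS.
rewrite e; apply/eqP; rewrite eqn_leq le /=.
rewrite ltnNge; apply/negP => /leq_sizeP /(_ _ (leqnn _)); rewrite top => /eqP.
rewrite mulf_eq0 -!lead_coefE !lead_coef_eq0 => /orP [] /eqP; [exact/eqP| exact/eqP].
Qed.

Lemma dmul_eq0 P Q : Q != 0 -> dmul S P Q = 0 -> P = 0.
Proof.
move=> Q0 e; case: (eqVneq P 0) => // P0; exfalso.
by have := size_dmul P Q P0 Q0; rewrite e size_poly0 => /esym/eqP;
  rewrite -subn1 subn_eq0 leqNgt -addn1 leq_add // size_poly_gt0.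
Qed.

Implicit Types (M N : {poly {poly K}}).

Lemma bidF_wide M G n : (size M <= n)%N ->
  bidF S M G = \sum_(k < n) dern S k G *: M`_k.
Proof.
move=> hM; rewrite /bidF; symmetry.
apply: (sum_bnd _ (fun k => dern S k G *: M`_k)) => k hk.
  by rewrite nth_default ?scaler0.
by rewrite nth_default ?scaler0 //; apply: leq_trans hk.
Qed.

Lemma bidFD M N G : bidF S (M + N) G = bidF S M G + bidF S N G.
Proof.
set n := maxn (size (M + N)) (maxn (size M) (size N)).
have h1 : (size (M + N)%R <= n)%N by rewrite leq_maxl.
have h2 : (size M <= n)%N by rewrite /n !leq_max leqnn orbT.
have h3 : (size N <= n)%N by rewrite /n !leq_max leqnn !orbT.
rewrite (bidF_wide _ G n h1) (bidF_wide _ G n h2) (bidF_wide _ G n h3) -big_split.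
by apply: eq_bigr => i _; rewrite coefD scalerDr.
Qed.

Lemma bidF0 G : bidF S 0 G = 0.
Proof. by rewrite /bidF size_poly0 big_ord0. Qed.

Lemma coef_bidF M G j :
  (bidF S M G)`_j = dapply S (\poly_(k < size M) (M`_k)`_j) G.
Proof.
rewrite /bidF coef_sum_ord (dapply_wide _ G _ (size_poly _ _)).
by apply: eq_bigr => k _; rewrite coefZ coef_poly ltn_ord mulrC.
Qed.

Lemma bid_size M D : (forall G, G \in V S -> (size (bidF S M G) <= D)%N) ->
  forall k, (size (M`_k)%R <= D)%N.
Proof.
move=> h k; case: (ltnP k (size M)) => kM; last by rewrite nth_default ?size_poly0.
apply/leq_sizeP => j Dj.
set Pj := \poly_(k < size M) (M`_k)`_j.
have : Pj = 0.
  apply: dapply_ext0 => G hG; rewrite -coef_bidF.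
  by move/leq_sizeP: (h G hG) => ->.
by move/(congr1 (fun p : {poly K} => p`_k)); rewrite coef_poly kM coef0.
Qed.

Lemma size_bidF_le M G D : (forall k, (size (M`_k)%R <= D)%N) -> (size (bidF S M G) <= D)%N.
Proof.
move=> h; apply: size_sum_ord => k; apply: leq_trans (size_scale_leq _ _) _; exact: h.
Qed.

Definition isbid (Phi : K -> {poly K}) := exists M, forall G, Phi G = bidF S M G.

Lemma isbid_ext Phi Psi : (forall G, Phi G = Psi G) -> isbid Phi -> isbid Psi.
Proof. by move=> e [M hM]; exists M => G; rewrite -e. Qed.

Lemma isbid_single P Q : isbid (fun G => dapply S P G *: Q).
Proof.
exists (\poly_(k < size P) (P`_k *: Q)) => G.
rewrite (bidF_wide _ G _ (size_poly _ _)) /dapply scaler_suml.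
by apply: eq_bigr => k _; rewrite coef_poly ltn_ord scalerA mulrC.
Qed.

Lemma isbid0 : isbid (fun _ => 0).
Proof. by exists 0 => G; rewrite bidF0. Qed.

Lemma isbid_add Phi Psi : isbid Phi -> isbid Psi -> isbid (fun G => Phi G + Psi G).
Proof. by move=> [M hM] [N hN]; exists (M + N) => G; rewrite bidFD hM hN. Qed.

Lemma isbid_opp Phi : isbid Phi -> isbid (fun G => - Phi G).
Proof.
move=> [M hM]; exists (- M) => G; apply: (addrI (Phi G)).
by rewrite subrr hM -bidFD subrr bidF0.
Qed.

Lemma isbid_sub Phi Psi : isbid Phi -> isbid Psi -> isbid (fun G => Phi G - Psi G).
Proof. by move=> h1 h2; apply: isbid_add => //; apply: isbid_opp. Qed.

Lemma isbid_sum n (Phi : 'I_n -> K -> {poly K}) :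
  (forall i, isbid (Phi i)) -> isbid (fun G => \sum_(i < n) Phi i G).
Proof.
elim: n Phi => [|n IH] Phi h.
  by apply: (isbid_ext (fun _ => 0)) => [G|]; rewrite ?big_ord0 //; apply: isbid0.
apply: (isbid_ext (fun G => Phi ord0 G + \sum_(i < n) Phi (lift ord0 i) G)).
  by move=> G; rewrite big_ord_recl.
by apply: isbid_add => //; apply: IH.
Qed.

Lemma bidF_singles M G : bidF S M G = \sum_(k < size M) dapply S 'X^k G *: M`_k.
Proof. by apply: eq_bigr => k _; rewrite dapplyXn. Qed.

Lemma isbid_bidF M : isbid (bidF S M).
Proof. by exists M. Qed.

Lemma isbid_dmul_r Phi Q : isbid Phi -> isbid (fun G => dmul S (Phi G) Q).
Proof.
move=> [M hM].
apply: (isbid_ext (fun G => \sum_(k < size M) dapply S 'X^k G *: dmul S M`_k Q)).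
  move=> G; rewrite hM bidF_singles dmulsuml; apply: eq_bigr => k _.
  by rewrite dmulZl.
by apply: isbid_sum => k; apply: isbid_single.
Qed.

Lemma isbid_comp Phi C : isbid Phi -> isbid (fun G => Phi (dapply S C G)).
Proof.
move=> [M hM].
apply: (isbid_ext (fun G => \sum_(k < size M) dapply S (dmul S 'X^k C) G *: M`_k)).
  by move=> G; rewrite hM bidF_singles; apply: eq_bigr => k _; rewrite dapply_dmul.
by apply: isbid_sum => k; apply: isbid_single.
Qed.

Definition Dl (l : nat) P : {poly K} := \sum_(i < size P) (P`_i * 'C(i, l)%:R) *: 'X^(i - l).

Lemma dmul_scal P a Q :
  dmul S P (a *: Q) = \sum_(l < size P) dern S l a *: dmul S (Dl l P) Q.
Proof.
apply: dapply_ext => G _; rewrite dapply_dmul dapplyZ dapplysum_ord.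
set x := dapply S Q G.
have e : forall l : 'I_(size P), dapply S (dmul S (Dl l P) Q) G =
    \sum_(i < size P) P`_i * 'C(i,l)%:R * dern S (i - l) x.
  move=> l; rewrite dapply_dmul /Dl dapplysum_ord; apply: eq_bigr => i _.
  by rewrite dapplyZXn.
under [RHS]eq_bigr => l _ do rewrite dapplyZ e mulr_sumr.
rewrite exchange_big /= /dapply; apply: eq_bigr => i _.
rewrite dern_mul mulr_sumr.
rewrite (sum_bnd _ (fun l => P`_i * ('C(i, l)%:R * (dern S l a * dern S (i - l) x))) (size P) i.+1).
- by apply: eq_bigr => l _; ring.
- move=> l hl; rewrite bin_small ?mul0r ?mulr0 //; exact: leq_trans (ltn_ord i) hl.
- by move=> l hl; rewrite bin_small ?mul0r ?mulr0.
Qed.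

Lemma dmulsumr n (g : 'I_n -> {poly K}) P :
  dmul S P (\sum_(i < n) g i) = \sum_(i < n) dmul S P (g i).
Proof.
apply: dapply_ext => G _; rewrite dapply_dmul !dapplysum_ord dapplyFsum.
by apply: eq_bigr => i _; rewrite dapply_dmul.
Qed.

Lemma isbid_dmul_l P Phi : isbid Phi -> isbid (fun G => dmul S P (Phi G)).
Proof.
move=> [M hM].
apply: (isbid_ext (fun G => \sum_(k < size M) \sum_(l < size P)
   dapply S 'X^(l + k) G *: dmul S (Dl l P) M`_k)).
  move=> G; rewrite hM /bidF dmulsumr; apply: eq_bigr => k _.
  by rewrite dmul_scal; apply: eq_bigr => l _; rewrite dapplyXn dern_add.
by apply: isbid_sum => k; apply: isbid_sum => l; apply: isbid_single.
Qed.

Lemma XFop_sum F P : XFop S F P = \sum_(i < size P) XF S F P`_i *: 'X^i.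
Proof. by rewrite /XFop /map_poly poly_def. Qed.

Lemma isbid_LB B :
  isbid (fun G => XFop S (dapply S B G) B - dmul S (DopF S B G) B).
Proof.
apply: isbid_sub.
  apply: (isbid_ext (fun G => \sum_(i < size B)
      dapply S (dmul S (Dfun S B`_i) B) G *: 'X^i)).
    by move=> G; rewrite XFop_sum; apply: eq_bigr => i _; rewrite dapply_dmul dapply_Dfun.
  by apply: isbid_sum => i; apply: isbid_single.
apply: isbid_dmul_r.
apply: (isbid_ext (fun G => \sum_(k < size B) dapply S 'X^k G *: Dfun S B`_k)).
  by move=> G; rewrite /DopF; apply: eq_bigr => k _; rewrite dapplyXn.
by apply: isbid_sum => k; apply: isbid_single.
Qed.

Lemma bidF_mono (x : nat -> K) n e G :
  bidF S (\poly_(k < n) (x k *: 'X^e)) G = dapply S (\poly_(k < n) x k) G *: 'X^e.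
Proof.
rewrite (bidF_wide _ G n (size_poly _ _)) (dapply_wide _ G n (size_poly _ _)) scaler_suml.
by apply: eq_bigr => k _; rewrite !coef_poly ltn_ord scalerA mulrC.
Qed.

Lemma bid_div (B : {poly K}) : B != 0 -> forall D M, (forall k, (size (M`_k)%R <= D)%N) ->
  exists N (Rr : {poly {poly K}}), (forall k, (size (Rr`_k)%R < size B)%N) /\
     forall G, bidF S M G = dmul S B (bidF S N G) + bidF S Rr G.
Proof.
move=> B0; elim=> [|D IH] M hM.
  exists 0, M; split => [k|G]; last by rewrite bidF0 dmul0r add0r.
  by apply: leq_ltn_trans (hM k) _; rewrite size_poly_gt0.
case: (ltnP D.+1 (size B)) => hD.
  exists 0, M; split => [k|G]; last by rewrite bidF0 dmul0r add0r.
  exact: leq_ltn_trans (hM k) hD.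
set bn := lead_coef B; set e := (D - (size B).-1)%N.
have sB : size B = (size B).-1.+1 by rewrite prednK // size_poly_gt0.
have De : ((size B).-1 + e)%N = D by rewrite /e subnKC // -ltnS -sB.
pose N1 := \poly_(k < size M) ((bn^-1 * (M`_k)`_D) *: ('X^e : {poly K})).
pose Phi := fun G => bidF S M G - dmul S B (bidF S N1 G).
have [M' hM'] : isbid Phi.
  by apply: isbid_sub; [apply: isbid_bidF | apply: isbid_dmul_l; apply: isbid_bidF].
have sM' : forall k, (size (M'`_k)%R <= D)%N.
  apply: bid_size => G _; rewrite -hM' /Phi.
  set c := dapply S (\poly_(k < size M) (bn^-1 * (M`_k)`_D)) G.
  have eN1 : bidF S N1 G = c *: 'X^e by rewrite /N1 bidF_mono.
  have s1 : (size (bidF S M G) <= D.+1)%N by apply: size_bidF_le.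
  have s2 : (size (dmul S B (bidF S N1 G)) <= D.+1)%N.
    rewrite -De eN1; apply: size_dmul_le; first by rewrite -sB.
    by apply: leq_trans (size_scale_leq _ _) _; rewrite size_polyXn.
  have c2 : (dmul S B (bidF S N1 G))`_D = (bidF S M G)`_D.
    rewrite -{1}De coef_dmul_top; first last.
    - by rewrite eN1; apply: leq_trans (size_scale_leq _ _) _; rewrite size_polyXn.
    - by rewrite -sB.
    rewrite eN1 coefZ coefXn eqxx mulr1 coef_bidF -lead_coefE -/bn /c.
    have -> : \poly_(k < size M) (bn^-1 * (M`_k)`_D) = bn^-1 *: \poly_(k < size M) (M`_k)`_D.
      by apply/polyP => j; rewrite coefZ !coef_poly; case: ifP; rewrite ?mulr0.
    rewrite dapplyZ mulrA divff ?mul1r // /bn lead_coef_eq0 //.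
  apply/leq_sizeP => j hj; rewrite coefB.
  case: (eqVneq j D) => [->|jD]; first by rewrite c2 subrr.
  have hj' : (D.+1 <= j)%N by rewrite ltn_neqAle eq_sym jD hj.
  by rewrite (leq_sizeP _ _ s1 j hj') (leq_sizeP _ _ s2 j hj') subrr.
have [N' [Rr [hRr hN']]] := IH M' sM'.
exists (N1 + N'), Rr; split => // G.
have := hM' G; rewrite /Phi => /eqP; rewrite subr_eq => /eqP ->.
by rewrite hN' bidFD dmulDr; ring.
Qed.

Definition pbnd P := (\max_(e < size P) ord S P`_e)%N.

Lemma pbndP P e : bnd (P`_e) (pbnd P).
Proof.
case: (ltnP e (size P)) => he; last by rewrite nth_default //; apply: bnd0.
apply: bnd_ordle.
exact: (@leq_bigmax _ (fun k : 'I_(size P) => ord S P`_k) (Ordinal he)).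
Qed.

Lemma coef_dmul_wide P Q n m e : (size P <= n)%N -> (size Q <= m)%N ->
  (dmul S P Q)`_e = \sum_(i < n) \sum_(j < m) \sum_(l < i.+1)
     P`_i * 'C(i, l)%:R * dern S l Q`_j * (e == (i - l + j)%N)%:R.
Proof.
move=> hP hQ; rewrite (dmul_wide P Q n m hP hQ) coef_sum_ord; apply: eq_bigr => i _.
rewrite coef_sum_ord; apply: eq_bigr => j _.
by rewrite coef_sum_ord; apply: eq_bigr => l _; rewrite coefZ coefXn.
Qed.

Lemma dnatM t x (k : nat) : d S t (x * k%:R) = d S t x * k%:R.
Proof. by rewrite dM dnat mulr0 add0r mulrC. Qed.

Lemma sum_delta m (f : nat -> K) (e : nat) :
  \sum_(j < m) f j * (e == j :> nat)%:R = if (e < m)%N then f e else 0.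
Proof.
have h : forall x : nat, f x * (e == x)%:R = if x == e then f x else 0.
  move=> x; case: (eqVneq x e) => _; by rewrite ?mulr1 ?mulr0.
rewrite (eq_bigr (fun j : 'I_m => if (j:nat) == e then f j else 0) (fun j _ => h j)) -big_mkcond /=.
exact: (big_ord1_eq (+%R : Monoid.law (0 : K)) f e m).
Qed.

Lemma size_dmul_le2 P Q : (size (dmul S P Q) <= (size P + size Q).-1)%N.
Proof.
case: (eqVneq P 0) => [->|P0]; first by rewrite dmul0l size_poly0.
case: (eqVneq Q 0) => [->|Q0]; first by rewrite dmul0r size_poly0.
by rewrite size_dmul.
Qed.

Lemma dmul_d_top (B Z : {poly K}) OB H : (forall i, bnd (B`_i) OB) -> (OB <= H)%N ->
  (forall t e, (H < t)%N -> d S t (Z`_e) = 0) ->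
  (forall t e, (H + (size B).-1 < t)%N -> d S t ((dmul S B Z)`_e) = 0) /\
  (forall e, d S (H + (size B).-1) ((dmul S B Z)`_e) = lead_coef B * d S H (Z`_e)).
Proof.
move=> hB hOB hZ.
case: (eqVneq B 0) => [->|B0].
  split=> [t e _|e]; first by rewrite dmul0l coef0 d0.
  by rewrite dmul0l coef0 d0 lead_coef0 mul0r.
set n := (size B).-1.
have sB : size B = n.+1 by rewrite prednK // size_poly_gt0.
have dterm : forall t (i j l : nat) e, (OB <= t)%N ->
    d S t (B`_i * 'C(i, l)%:R * dern S l Z`_j * (e == (i - l + j)%N)%:R) =
    B`_i * 'C(i, l)%:R * d S t (dern S l Z`_j) * (e == (i - l + j)%N)%:R.
  move=> t i j l e hM; rewrite dnatM dM dnatM (hB i t hM) mul0r mulr0 addr0.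
  by [].
split.
  move=> t e hM.
  have hOt : (OB <= t)%N by apply: (leq_trans hOB); apply: ltnW; apply: leq_ltn_trans _ hM; rewrite leq_addr.
  rewrite (coef_dmul_wide B Z n.+1 (size Z) e) ?sB // dsum big1 // => i _.
  rewrite dsum big1 // => j _; rewrite dsum big1 // => l _.
  rewrite (dterm t i j l e hOt).
  have hl : (H + l < t)%N.
    apply: leq_ltn_trans _ hM; rewrite leq_add2l.
    have := ltn_ord l; have := ltn_ord i; rewrite !ltnS => h1 h2; exact: leq_trans h2 h1.
  by rewrite (proj1 (d_dern_top _ _ l (hZ^~ j)) t hl) mulr0 mul0r.
move=> e; rewrite (coef_dmul_wide B Z n.+1 (size Z) e) ?sB // dsum big_ord_recr /=.
have hM : (OB <= H + n)%N by apply: leq_trans hOB (leq_addr _ _).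
rewrite big1 ?add0r; last first.
  move=> i _; rewrite dsum big1 // => j _; rewrite dsum big1 // => l _.
  rewrite dterm //; have hl : (H + l < H + n)%N.
    rewrite ltn_add2l; have := ltn_ord l; rewrite ltnS => h; apply: leq_ltn_trans h _.
    exact: ltn_ord.
  by rewrite (proj1 (d_dern_top _ _ l (hZ^~ j)) _ hl) mulr0 mul0r.
rewrite dsum.
have -> : \sum_(j < size Z) d S (H + n) (\sum_(l < n.+1)
    B`_n * 'C(n, l)%:R * dern S l Z`_j * (e == (n - l + j)%N)%:R) =
  \sum_(j < size Z) (lead_coef B * d S H Z`_j) * (e == j)%:R.
  apply: eq_bigr => j _; rewrite dsum big_ord_recr /=.
  rewrite big1 ?add0r; last first.
    move=> l _; rewrite dterm //=; have hl : (H + l < H + n)%N by rewrite ltn_add2l.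
    by rewrite (proj1 (d_dern_top _ _ l (hZ^~ j)) _ hl) mulr0 mul0r.
  rewrite dterm //= (proj2 (d_dern_top _ _ n (hZ^~ j))).
  by rewrite binn subnn add0n mulr1 lead_coefE sB.
rewrite (sum_delta (size Z) (fun j => lead_coef B * d S H Z`_j) e); case: ifP => // /negbT; rewrite -leqNgt => he.
by rewrite nth_default // d0 mulr0.
Qed.

Lemma crux (B C : {poly K}) (Sm : {poly {poly K}}) :
  B != 0 -> C != 0 -> (forall j, (size (Sm`_j)%R < size B)%N) ->
  (forall F, F \in V S -> exists Z, dmul S (bidF S Sm F) C = dmul S B Z) -> Sm = 0.
Proof.
move=> B0 C0 hSm hZ; case: (eqVneq Sm 0) => // Sm0; exfalso.
pose T := fun j => dmul S Sm`_j C.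
set J := (size Sm).-1.
have sSm : size Sm = J.+1 by rewrite /J prednK // size_poly_gt0.
have SJ0 : Sm`_J != 0 by rewrite -lead_coefE lead_coef_eq0.
have TJ0 : T J != 0.
  by apply/negP => /eqP h; move/negP: SJ0; apply; apply/eqP; apply: dmul_eq0 C0 h.
set OB := pbnd B.
have hB : forall i, bnd (B`_i) OB by move=> i; apply: pbndP.
set OT := (\max_(j < size Sm) pbnd (T j))%N.
have hT : forall j e, (j < size Sm)%N -> bnd ((T j)`_e) OT.
  move=> j e hj; apply: bnd_le (pbndP _ e) _.
  exact: (@leq_bigmax _ (fun j : 'I_(size Sm) => pbnd (T j)) (Ordinal hj)).
set n := (size B).-1.
have sB : size B = n.+1 by rewrite /n prednK // size_poly_gt0.
set N := (OT + OB + n).+1.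
have [Z hZN] := hZ (u S N) (Vu S N).
set Pp := dmul S (bidF S Sm (u S N)) C.
have hPp : Pp = dmul S B Z by rewrite /Pp hZN.
have ePp : Pp = \sum_(j < size Sm) u S (N + j) *: T j.
  by rewrite /Pp /bidF dmulsuml; apply: eq_bigr => j _; rewrite dmulZl dern_u.
have dP : forall t e, (N <= t)%N ->
    d S t (Pp`_e) = \sum_(j < size Sm) (T j)`_e * (t == N + j :> nat)%:R.
  move=> t e ht; rewrite ePp coef_sum_ord dsum; apply: eq_bigr => j _.
  have hOT : (OT <= t)%N by move: ht; rewrite /N; lia.
  by rewrite coefZ dM du (hT j e (ltn_ord j) t hOT) mulr0 add0r.
have a1 : forall t e, (N + J < t)%N -> d S t (Pp`_e) = 0.
  move=> t e ht; rewrite dP; last by apply: leq_trans (leq_addr J N) _; apply: ltnW.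
  rewrite big1 // => j _; suff -> : (t == N + j) = false by rewrite mulr0.
  apply/negbTE; rewrite neq_ltn; apply/orP; right; apply: leq_ltn_trans ht.
  by rewrite leq_add2l -ltnS -sSm.
have a2 : forall e, d S (N + J) (Pp`_e) = (T J)`_e.
  move=> e; rewrite dP ?leq_addr //.
  under eq_bigr => j _ do rewrite eqn_add2l.
  by rewrite (sum_delta (size Sm) (fun j => (T j)`_e) J) sSm ltnSn.
have sY : (size (bidF S Sm (u S N)) <= n)%N.
  by apply: size_bidF_le => k; rewrite -ltnS -sB.
have sZ : (size Z <= (size C).-1)%N.
  case: (eqVneq Z 0) => [->|Z0]; first by rewrite size_poly0.
  have e1 := size_dmul B Z B0 Z0.
  have e2 := size_dmul_le2 (bidF S Sm (u S N)) C.
  rewrite -/Pp hPp e1 sB in e2.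
  have hC : (0 < size C)%N by rewrite size_poly_gt0.
  have hZ0 : (0 < size Z)%N by rewrite size_poly_gt0.
  lia.
have sTJ : ((size C).-1 <= (size (T J)).-1)%N.
  rewrite /T (size_dmul _ _ SJ0 C0); have : (0 < size (Sm`_J)%R)%N by rewrite size_poly_gt0.
  lia.
have leadTJ : (T J)`_(size (T J)).-1 != 0 by rewrite -lead_coefE lead_coef_eq0.
have TJz : (forall e, (T J)`_e = 0) -> False.
  by move=> h; move/negP: leadTJ; apply; rewrite h.
have lB0 : lead_coef B != 0 by rewrite lead_coef_eq0.
have key : forall k, (forall t e, (OB + k < t)%N -> d S t (Z`_e) = 0) -> False.
  elim=> [|k IH] hk.
    have hk' : forall t e, (OB < t)%N -> d S t (Z`_e) = 0.
      by move=> t e h; apply: hk; rewrite addn0.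
    have [p1 _] := dmul_d_top B Z OB OB hB (leqnn _) hk'.
    apply: TJz => e; rewrite -a2 hPp p1 //.
    by rewrite /n /N; lia.
  set H := (OB + k.+1)%N.
  have [p1 p2] := dmul_d_top B Z OB H hB (leq_addr _ _) hk.
  case: (ltngtP (N + J) (H + n)) => hc.
  - have zero : forall e, d S H (Z`_e) = 0.
      move=> e; have := p2 e; rewrite -hPp a1 // => /esym/eqP.
      by rewrite mulf_eq0 (negbTE lB0) /= => /eqP.
    apply: IH => t e ht; case: (eqVneq t H) => [->|tH]; first exact: zero.
    by apply: hk; rewrite ltn_neqAle eq_sym tH /= /H addnS.
  - by apply: TJz => e; rewrite -a2 hPp p1.
  - move: leadTJ; rewrite -a2 hPp hc p2 nth_default ?d0 ?mulr0 ?eqxx //.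
    exact: leq_trans sZ sTJ.
apply: (key (pbnd Z)) => t e ht; apply: (pbndP Z e t).
by apply: ltnW; apply: leq_ltn_trans ht; rewrite leq_addl.
Qed.

Definition LB (B : {poly K}) (G : K) :=
  XFop S (dapply S B G) B - dmul S (DopF S B G) B.

Lemma LA_decomp (B C : {poly K}) M F :
  XFop S (dapply S (dmul S B C) F) (dmul S B C) - dmul S (DopF S (dmul S B C) F) (dmul S B C)
    = dmul S (dmul S B C) (bidF S M F) ->
  dmul S (LB B (dapply S C F)) C = dmul S B (dmul S C (bidF S M F) -
     (XFop S (dapply S (dmul S B C) F) C - dmul S (DopF S C F) (dmul S B C))).
Proof.
move=> hA; apply: dapply_ext => H _.
have hyp := congr1 (fun P => dapply S P H) hA; rewrite /= in hyp.
rewrite /LB !(dapplyB, dapply_dmul, dapply_XFop, dapply_DopF, dapplyFB) in hyp *.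
rewrite -hyp; ring.
Qed.

Lemma lemma3p7_aux (A B C : {poly K}) :
  C != 0 -> A = dmul S B C -> integrable S A -> integrable S B.
Proof.
move=> C0 hA [M hM].
case: (eqVneq B 0) => [->|B0].
  exists 0 => F _; by rewrite dmul0l dmul0r /XFop map_poly0 subrr.
have [Lam hLam0] := isbid_LB B.
have hLam : forall G, LB B G = bidF S Lam G by move=> G; rewrite -hLam0.
set D := (\max_(k < size Lam) size (Lam`_k)%R)%N.
have hD : forall k, (size (Lam`_k)%R <= D)%N.
  move=> k; case: (ltnP k (size Lam)) => hk; last by rewrite nth_default ?size_poly0.
  exact: (@leq_bigmax _ (fun k : 'I_(size Lam) => size (Lam`_k)%R) (Ordinal hk)).
have [Nq [Rr [hRr hdiv]]] := bid_div B B0 D Lam hD.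
have [Sm hSm0] := isbid_comp (bidF S Rr) C (isbid_bidF Rr).
have hSm : forall G, bidF S Rr (dapply S C G) = bidF S Sm G by move=> G; rewrite -hSm0.
have sB : (0 < size B)%N by rewrite size_poly_gt0.
have sSm : forall j, (size (Sm`_j)%R < size B)%N.
  move=> j; rewrite -(prednK sB) ltnS; move: j; apply: bid_size => G _.
  rewrite -hSm; apply: size_bidF_le => k; rewrite -ltnS prednK //.
have eR : forall G, bidF S Rr G = LB B G - dmul S B (bidF S Nq G).
  by move=> G; rewrite hLam hdiv; ring.
have Sm0 : Sm = 0.
  apply: (crux B C Sm B0 C0 sSm) => F hF.
  have := LA_decomp B C M F; rewrite -hA => /(_ (hM F hF)) e.
  eexists; rewrite -hSm eR dmulBl e dmulA -dmulBr; reflexivity.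
have R0 : forall G, bidF S Rr G = 0.
  move=> G; apply/polyP => j; rewrite coef_bidF coef0.
  set Pj := \poly_(k < size Rr) (Rr`_k)`_j.
  suff -> : Pj = 0 by rewrite dapply0.
  apply: (dmul_eq0 Pj C C0); apply: dapply_ext0 => F _.
  by rewrite dapply_dmul -coef_bidF hSm Sm0 bidF0 coef0.
exists Nq => F _; have := hLam F; rewrite /LB => ->; by rewrite hdiv R0 addr0.
Qed.
End Basic.

Theorem lemma3p7 (R : realType) (K : fieldType) (S : DiffAlg R K)
    (A B C : {poly K}) :
  constants_alg_closed S ->
  C != 0 ->
  A = dmul S B C ->
  integrable S A ->
  integrable S B.
Proof. by move=> _; apply: lemma3p7_aux. Qed.
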